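(* Let $A_1,A_2\subset\mathcal{M}$ be sets of copies of $G_0$, let $\hat A_2:=\bigcup_{\Gamma\in A_2}\mathcal{M}_\Gamma$, and let $F$ be a non-negative functional of $\{B_\Gamma\}_{\Gamma\in A_2}$, so that $F$ is independent of $\{B_\Gamma\}_{\Gamma\in\mathcal{M}\setminus\hat A_2}$. Then for all $t\ge0$, $$\mathbb{E}\Big[F\,e^{\frac t\sigma\sum_{\Gamma\in\mathcal{M}\setminus A_1}B_\Gamma^c}\Big]\le\mathbb{E}[F]\,e^{\frac t\sigma|A_1\cup\hat A_2|}\,\mathbb{E}[e^{tW}],$$ and in particular $$\mathbb{E}\Big[e^{\frac t\sigma\sum_{\Gamma\in\mathcal{M}\setminus A_1}B_\Gamma^c}\Big]\le e^{\frac t\sigma|A_1|}\,\mathbb{E}[e^{tW}].$$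
   Context: $G_0$ is a graph with at least one edge and no isolated vertices. $E$ is the set of edges of $K_n$; $(B_k)_{k\in E}$ are independent Bernoulli($p$), $p\in(0,1)$; $B_A=\prod_{k\in A}B_k$, $Z^c=Z-\mathbb{E}Z$. $\mathcal{M}$ is the set of all $\Gamma\subset E$ whose spanned graph is isomorphic to $G_0$; for $\Gamma\in\mathcal{M}$, $\mathcal{M}_\Gamma=\{\Gamma'\in\mathcal{M}:\Gamma'\cap\Gamma\neq\emptyset\}$. $\sigma^2=\operatorname{Var}(\sum_{\Gamma\in\mathcal{M}}B_\Gamma)$ and $W=\frac1\sigma\sum_{\Gamma\in\mathcal{M}}B_\Gamma^c$. *)

(* Defs.v *)
From HB Require Import structures.
From mathcomp Require Import all_boot all_order all_algebra.
From mathcomp Require Import all_classical all_reals all_analysis.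
Set Implicit Arguments. Unset Strict Implicit. Unset Printing Implicit Defensive.
Import Order.TTheory GRing.Theory Num.Theory.
Local Open Scope ring_scope.

(* Edges of K_n: 2-element subsets of the vertex set 'I_n. *)
Notation edge n := {e : {set 'I_n} | #|e| == 2%N}.

(* Sample space: configurations of the edge variables (B_k)_{k in E}. *)
Notation config n := {ffun edge n -> bool}.

Section Defs.
Variables (R : realType) (n : nat) (p : R).

Definition prob (w : config n) : R :=
  \prod_(k : edge n) (if w k then p else 1 - p).

Definition Expect (X : config n -> R) : R := \sum_(w : config n) prob w * X w.

Definition Var (X : config n -> R) : R :=
  Expect (fun w => (X w - Expect X) ^+ 2).

Definition BA (A : {set edge n}) (w : config n) : R :=
  \prod_(k in A) (w k)%:R.

Definition BAc (A : {set edge n}) (w : config n) : R :=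
  BA A w - Expect (BA A).

End Defs.

Definition spanV n (G : {set edge n}) : {set 'I_n} := \bigcup_(k in G) val k.

Definition iso_G0 (V0 : finType) (e0 : rel V0) n (G : {set edge n}) : Prop :=
  exists f : V0 -> 'I_n,
    [/\ injective f, f @: [set: V0] = spanV G &
        forall u v, e0 u v <-> exists2 k, k \in G & val k = [set f u; f v]].

Definition good_G0 (V0 : finType) (e0 : rel V0) : Prop :=
  [/\ symmetric e0, irreflexive e0, (exists u v, e0 u v) &
      forall u, exists v, e0 u v].

Section Copies.
Variables (V0 : finType) (e0 : rel V0) (n : nat).

Definition Mcopies : {set {set edge n}} :=
  [set G | `[< iso_G0 e0 G >]].
End Copies.

(* Main.v *)
Require Import Defs.
From HB Require Import structures.
From mathcomp Require Import all_boot all_order all_algebra.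
From mathcomp Require Import all_classical all_reals all_analysis.
From mathcomp Require Import ring lra.
Import Order.TTheory GRing.Theory Num.Theory.
Local Open Scope ring_scope.

Section Tools.
Variables (R : realType) (n : nat) (p : R).
Hypothesis hp0 : 0 <= p.
Hypothesis hp1 : p <= 1.

Local Notation E := (@Expect R n p).

Definition upd (w : config n) (i : edge n) (b : bool) : config n :=
  [ffun k => if k == i then b else w k].
Definition flip (i : edge n) (w : config n) := upd w i (~~ w i).

Lemma updE w i b k : upd w i b k = if k == i then b else w k.
Proof. by rewrite ffunE. Qed.

Lemma flipK i : involutive (flip i).
Proof.
move=> w; apply/ffunP => k; rewrite /flip !updE eqxx.
by case: eqP => [->|//]; rewrite negbK.
Qed.

Lemma prob_ge0 w : 0 <= @prob R n p w.
Proof. by apply: prodr_ge0 => k _; case: (w k) => //=; rewrite subr_ge0. Qed.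

Lemma E_le (f g : config n -> R) : (forall w, f w <= g w) -> E f <= E g.
Proof. move=> h; apply: ler_sum => w _; apply: ler_wpM2l; [exact: prob_ge0|exact: h]. Qed.

Lemma E_ext {f g : config n -> R} : (forall w, f w = g w) -> E f = E g.
Proof. by move=> h; apply: eq_bigr => w _; rewrite h. Qed.

Lemma E_add f g : E (fun w => f w + g w) = E f + E g.
Proof. rewrite /Expect -big_split; apply: eq_bigr => w _ /=; ring. Qed.

Lemma E_scale c f : E (fun w => c * f w) = c * E f.
Proof. rewrite /Expect mulr_sumr; apply: eq_bigr => w _ /=; ring. Qed.

Lemma prob_sum : \sum_(w : config n) @prob R n p w = 1.
Proof.
rewrite /prob -(bigA_distr_bigA (fun (k : edge n) (b : bool) => if b then p else 1 - p)).
apply: big1 => k _; rewrite big_bool /=; ring.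
Qed.

Lemma E_const c : E (fun _ => c) = c.
Proof. by rewrite /Expect -mulr_suml prob_sum mul1r. Qed.

Lemma E_sum (T : finType) (A : pred T) (f : T -> config n -> R) :
  E (fun w => \sum_(G in A) f G w) = \sum_(G in A) E (f G).
Proof.
rewrite /Expect (exchange_big); apply: eq_bigr => G _ /=.
by rewrite mulr_sumr.
Qed.

Lemma pair_sum i (F : config n -> R) :
  \sum_(w : config n) F w = \sum_(w : config n | w i) (F w + F (flip i w)).
Proof.
rewrite [LHS](bigID (fun w : config n => w i)) big_split /=; congr (_ + _).
rewrite (reindex_inj (can_inj (flipK i))) /=.
by apply: eq_bigl => w; rewrite /flip updE eqxx negbK.
Qed.

Definition rest i (w : config n) := \prod_(k | k != i) (if w k then p else 1 - p).

Lemma prob_split i w : @prob R n p w = (if w i then p else 1 - p) * rest i w.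
Proof. by rewrite /prob (bigD1 i) //. Qed.

Lemma rest_upd i w b : rest i (upd w i b) = rest i w.
Proof. by apply: eq_bigr => k /negbTE hk; rewrite updE hk. Qed.

Definition avg i (h : config n -> R) w :=
  p * h (upd w i true) + (1 - p) * h (upd w i false).

Lemma upd_id w i : upd w i (w i) = w.
Proof. by apply/ffunP => k; rewrite updE; case: eqP => // ->. Qed.

Lemma upd_upd w i b c : upd (upd w i b) i c = upd w i c.
Proof. by apply/ffunP => k; rewrite !updE; case: eqP => // _; rewrite implybb. Qed.

Lemma E_avg i h : E h = E (avg i h).
Proof.
rewrite /Expect (pair_sum i) [RHS](pair_sum i).
apply: eq_bigr => w wi.
have e1 : upd w i true = w by rewrite -{1}wi upd_id.
have e2 : flip i w = upd w i false by rewrite /flip wi.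
rewrite /avg e2 !upd_upd e1 !(prob_split i) !updE eqxx wi rest_upd; ring.
Qed.

Definition dep (S : {set edge n}) (f : config n -> R) :=
  forall w w' : config n, (forall k, k \in S -> w k = w' k) -> f w = f w'.
Definition mono (f : config n -> R) :=
  forall w w' : config n, (forall k, w k ==> w' k) -> f w <= f w'.

Lemma dep_sub (A B : {set edge n}) f : A \subset B -> dep A f -> dep B f.
Proof. by move=> /fintype.subsetP AB h w w' e; apply: h => k /AB; apply: e. Qed.

Lemma dep_avg (S : {set edge n}) i h : i \in S -> dep S h -> dep (S :\ i) (avg i h).
Proof.
move=> iS dh w w' e; rewrite /avg.
have H b : h (upd w i b) = h (upd w' i b).
  apply: dh => k kS; rewrite !updE; case: eqP => // /eqP ki.
  by apply: e; rewrite !inE ki.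
by rewrite !H.
Qed.

Lemma mono_avg i h : mono h -> mono (avg i h).
Proof.
move=> mh w w' le; rewrite /avg.
have H b : h (upd w i b) <= h (upd w' i b).
  by apply: mh => k; rewrite !updE; case: eqP => // _; rewrite implybb.
by apply: lerD; apply: ler_wpM2l => //; rewrite subr_ge0.
Qed.

Lemma dep0 f : dep finset.set0 f -> forall w, f w = f [ffun _ => true].
Proof. by move=> h w; apply: h => k; rewrite inE. Qed.

Lemma harris_gen k : forall (S : {set edge n}) f g, #|S| = k ->
  dep S f -> dep S g -> mono f -> mono g -> E f * E g <= E (fun w => f w * g w).
Proof.
elim: k => [|k IH] S f g cS df dg mf mg.
  move: df dg; rewrite (cards0_eq cS) => df dg.
  rewrite (E_ext (@dep0 _ df)) E_const.
  by rewrite (E_ext (fun w => congr1 (fun x => x * g w) (@dep0 _ df w))) E_scale.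
have : S != finset.set0 by apply/negP => /eqP S0; rewrite S0 cards0 in cS.
case/set0Pn => i iS.
have cS' : #|S :\ i| = k by move: cS; rewrite (cardsD1 i) iS add1n => -[].
rewrite (E_avg i f) (E_avg i g) (E_avg i (fun w => f w * g w)).
apply: (le_trans (IH _ _ _ cS' (@dep_avg _ _ _ iS df) (@dep_avg _ _ _ iS dg) (@mono_avg i _ mf) (@mono_avg i _ mg))).
apply: E_le => w; rewrite /avg.
set f1 := f (upd w i true); set f0 := f (upd w i false).
set g1 := g (upd w i true); set g0 := g (upd w i false).
have hf : f0 <= f1 by apply: mf => k'; rewrite !updE; case: eqP => // _; rewrite implybb.
have hg : g0 <= g1 by apply: mg => k'; rewrite !updE; case: eqP => // _; rewrite implybb.
have e : p * (f1 * g1) + (1 - p) * (f0 * g0) - (p * f1 + (1 - p) * f0) * (p * g1 + (1 - p) * g0)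
  = p * (1 - p) * ((f1 - f0) * (g1 - g0)) by ring.
rewrite -subr_ge0 e; apply: mulr_ge0; first by apply: mulr_ge0 => //; rewrite subr_ge0.
by apply: mulr_ge0; rewrite subr_ge0.
Qed.

Lemma harris f g : mono f -> mono g -> E f * E g <= E (fun w => f w * g w).
Proof.
move=> mf mg; apply: (@harris_gen _ [set: edge n]) => //.
  by move=> w w' e; congr f; apply/ffunP => k; apply: e; rewrite inE.
by move=> w w' e; congr g; apply/ffunP => k; apply: e; rewrite inE.
Qed.

Lemma indep_gen k : forall (S : {set edge n}) f g, #|S| = k ->
  dep S f -> dep (~: S) g -> E (fun w => f w * g w) = E f * E g.
Proof.
elim: k => [|k IH] S f g cS df dg.
  move: df dg; rewrite (cards0_eq cS) => df dg.
  rewrite (E_ext (@dep0 _ df)) E_const.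
  by rewrite (E_ext (fun w => congr1 (fun x => x * g w) (@dep0 _ df w))) E_scale.
have : S != finset.set0 by apply/negP => /eqP S0; rewrite S0 cards0 in cS.
case/set0Pn => i iS.
have cS' : #|S :\ i| = k by move: cS; rewrite (cardsD1 i) iS add1n => -[].
have dg' : dep (~: (S :\ i)) g.
  apply: dep_sub dg; apply/fintype.subsetP => x; rewrite !inE; apply: contra.
  by case/andP.
rewrite (E_avg i f) -(IH _ _ _ cS' (@dep_avg _ _ _ iS df) dg') (E_avg i).
apply: E_ext => w; rewrite /avg.
have H b : g (upd w i b) = g w.
  apply: dg => x; rewrite inE updE; case: eqP => // ->; by rewrite iS.
rewrite !H; ring.
Qed.

Lemma indep S f g : dep S f -> dep (~: S) g -> E (fun w => f w * g w) = E f * E g.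
Proof. exact: (@indep_gen _ S f g). Qed.

End Tools.
Arguments E_ext {R n p f g}.
Arguments E_le {R n p} hp0 hp1 {f g}.
Arguments E_add {R n p}.
Arguments E_scale {R n p}.
Arguments E_const {R n p}.
Arguments E_sum {R n p}.
Arguments harris {R n p} hp0 hp1 {f g}.

Theorem lemma5p6 (R : realType) (V0 : finType) (e0 : rel V0) (n : nat) (p : R)
  (hG0 : good_G0 e0) (hp : 0 < p < 1)
  (A1 : {set {set edge n}}) (hA1 : A1 \subset Mcopies e0 n) :
  let M := Mcopies e0 n in
  let M_ (G : {set edge n}) := [set G' in M | G' :&: G != finset.set0] in
  let sigma := Num.sqrt (Var p (fun w => \sum_(G in M) BA R G w)) in
  let W (w : config n) := sigma^-1 * \sum_(G in M) BAc p G w in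
  (forall (A2 : {set {set edge n}}) (F : config n -> R),
     A2 \subset M ->
     (forall w, 0 <= F w) ->
     (forall w w', (forall G, G \in A2 -> BA R G w = BA R G w') -> F w = F w') ->
     let hatA2 := \bigcup_(G in A2) M_ G in
     forall t : R, 0 <= t ->
       Expect p (fun w => F w * expR (t / sigma * \sum_(G in M :\: A1) BAc p G w))
       <= Expect p F * expR (t / sigma * #|A1 :|: hatA2|%:R)
          * Expect p (fun w => expR (t * W w)))
  /\
  (forall t : R, 0 <= t ->
     Expect p (fun w => expR (t / sigma * \sum_(G in M :\: A1) BAc p G w))
     <= expR (t / sigma * #|A1|%:R) * Expect p (fun w => expR (t * W w))).
Proof.
move=> M M_ sigma W.
have hp0 : 0 <= p by case/andP: hp => /ltW.
have hp1 : p <= 1 by case/andP: hp => _ /ltW.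
have BAge0 (G : {set edge n}) (w : config n) : 0 <= BA R G w by apply: prodr_ge0 => k _; apply: ler0n.
have BAle1 (G : {set edge n}) (w : config n) : BA R G w <= 1.
  by apply: prodr_ile1 => k _; case: (w k); rewrite /= ?ler01 ?lexx.
have BAmono (G : {set edge n}) : mono R n (BA R G).
  move=> w w' le; apply: ler_prod => k _; apply/andP; split; first exact: ler0n.
  by move: (le k); case: (w k); case: (w' k).
have Ege0 (f : config n -> R) : (forall w, 0 <= f w) -> 0 <= Expect p f.
  by move=> hf; apply: sumr_ge0 => w _; apply: mulr_ge0; [exact: prob_ge0|exact: hf].
have BAcle1 (G : {set edge n}) (w : config n) : BAc p G w <= 1.
  rewrite /BAc lerBlDr (le_trans (BAle1 G w)) // lerDl; exact: Ege0.
have EBAc (G : {set edge n}) : Expect p (BAc p G) = 0.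
  rewrite (@E_ext R n p _ (fun w => BA R G w + (- Expect p (BA R G)))) //.
  by rewrite E_add E_const subrr.
have part1 : forall (A2 : {set {set edge n}}) (F : config n -> R),
     A2 \subset M ->
     (forall w, 0 <= F w) ->
     (forall w w', (forall G, G \in A2 -> BA R G w = BA R G w') -> F w = F w') ->
     let hatA2 := \bigcup_(G in A2) M_ G in
     forall t : R, 0 <= t ->
       Expect p (fun w => F w * expR (t / sigma * \sum_(G in M :\: A1) BAc p G w))
       <= Expect p F * expR (t / sigma * #|A1 :|: hatA2|%:R)
          * Expect p (fun w => expR (t * W w)).
  move=> A2 F hA2 F0 hF hatA2 t t0.
  set c := t / sigma.
  have c0 : 0 <= c by apply: divr_ge0 => //; apply: sqrtr_ge0.
  set C := A1 :|: hatA2.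
  pose X w := \sum_(G in M :\: A1 | G \notin hatA2) BAc p G w.
  pose Y w := \sum_(G in M | ~~ ((G \in M :\: A1) && (G \notin hatA2))) BAc p G w.
  pose Z w := \sum_(G in M :\: A1 | G \in hatA2) BAc p G w.
  have sumZX w : \sum_(G in M :\: A1) BAc p G w = Z w + X w.
    by rewrite (bigID (fun G => G \in hatA2)).
  have Zle w : Z w <= #|C|%:R.
    apply: (@le_trans _ _ (\sum_(G in C) 1)); last by rewrite sumr_const.
    rewrite /Z big_mkcond [X in _ <= X]big_mkcond /=; apply: ler_sum => G _.
    case: ifP => [/andP[_ hG]|_]; last by case: ifP => _ //; exact: ler01.
    by rewrite (_ : G \in C) ?BAcle1 // /C inE hG orbT.
  apply: (@le_trans _ _ (Expect p (fun w => expR (c * #|C|%:R) * (F w * expR (c * X w))))).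
    apply: E_le => // w; rewrite sumZX mulrDr expRD mulrCA.
    apply: ler_wpM2r; first by apply: mulr_ge0 => //; apply: expR_ge0.
    by rewrite ler_expR; apply: ler_wpM2l.
  rewrite E_scale.
  pose S := \bigcup_(G in A2) G.
  rewrite (@indep _ _ _ S F (fun w => expR (c * X w))); first last.
  - move=> w w' e; congr expR; congr (c * _); apply: eq_bigr => G /andP[GM GnA].
    rewrite /BAc; congr (_ - _); apply: eq_bigr => k kG; rewrite (e k) //.
    rewrite inE; apply/negP => /bigcupP[G2 G2A k2].
    apply: (negP GnA); apply/bigcupP; exists G2 => //.
    rewrite /M_ inE; apply/andP; split; first by move: GM; rewrite inE => /andP[].
    by apply/set0Pn; exists k; rewrite inE kG k2.
  - move=> w w' e; apply: hF => G GA2; apply: eq_bigr => k kG; rewrite (e k) //.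
    by apply/bigcupP; exists G.
  have key : Expect p (fun w => expR (c * X w)) <= Expect p (fun w => expR (t * W w)).
    have tW w : expR (t * W w) = expR (c * X w) * expR (c * Y w).
      rewrite -expRD /W mulrA -mulrDr; congr (expR (_ * _)).
      rewrite (bigID (fun G => (G \in M :\: A1) && (G \notin hatA2))) /=; congr (_ + _).
      apply: eq_bigl => G; rewrite finset.in_setD.
      by case: (G \in M); case: (G \in A1); case: (G \in hatA2).
    rewrite (E_ext tW).
    have monoE (U : config n -> R) : mono R n U -> mono R n (fun w => expR (c * U w)).
      by move=> mU w w' le; rewrite ler_expR; apply: ler_wpM2l => //; apply: mU.
    have monoS (P : pred {set edge n}) : mono R n (fun w => \sum_(G | P G) BAc p G w).
      move=> w w' le; apply: ler_sum => G _; rewrite /BAc lerD2r; exact: BAmono.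
    apply: le_trans (harris hp0 hp1 (monoE _ (monoS _)) (monoE _ (monoS _))).
    rewrite -{1}[Expect p _]mulr1; apply: ler_wpM2l; first by apply: Ege0 => w; apply: expR_ge0.
    apply: (@le_trans _ _ (Expect p (fun w => 1 + c * Y w))).
      rewrite E_add E_const E_scale /Y E_sum big1 ?mulr0 ?addr0 //.
    by apply: E_le => // w; apply: expR_ge1Dx.
  rewrite mulrA [expR _ * _]mulrC; apply: ler_wpM2l => //.
  by apply: mulr_ge0; [exact: Ege0|exact: expR_ge0].
split; first exact: part1.
move=> t t0.
have := part1 finset.set0 (fun _ => 1) (finset.sub0set _) (fun _ => ler01) (fun _ _ _ => erefl) t t0.
rewrite big_set0 finset.setU0 E_const mul1r.
by rewrite (@E_ext R n p (fun w => 1 * _) (fun w => expR _) (fun w => mul1r _)).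
Qed.
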